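(* Let $\mathfrak g=\mathfrak v\oplus\mathfrak z$ be a two-step nilpotent Lie algebra with inner product, $B\in\mathbb R$, $\zeta_m\in\mathfrak z^*$, and $h(p)=\tfrac12|p+B\zeta_m|^2$ on $\mathfrak g^*$. Every integral curve of the Euler vector field $E_h$ has the form $p(t)=p_{\mathfrak v}(t)+\zeta_0$, where $\zeta_0\in\mathfrak z^*$ is constant and $p_{\mathfrak v}(t)\in\mathfrak v^*$ satisfies $p_{\mathfrak v}'(t)=\mathcal A(p_{\mathfrak v}(t))$ for some linear transformation $\mathcal A$ of $\mathfrak v^*$ that is skew-symmetric with respect to the restricted inner product.
   Context: $\mathfrak g$ is two-step nilpotent (nonabelian, all brackets central) with center $\mathfrak z$ and $\mathfrak v=\mathfrak z^\perp$; $\mathfrak v^*$ (resp. $\mathfrak z^*$) are functionals vanishing on $\mathfrak z$ (resp. $\mathfrak v$); $\mathfrak g^*$ has the dual inner product, $\sharp:\mathfrak g^*\to\mathfrak g$ the associated isomorphism, $|p|^2=\langle p,\sharp p\rangle$. The Poisson bracket on $\mathfrak g^*$ is $\{f,k\}(p)=-\langle p,[df_p,dk_p]\rangle$, and the Euler vector field of $h$ is $E_h(f)=\{f,h\}$, i.e. $E_h(p)=-\mathrm{ad}^*_{dh_p}p$ with $\langle\mathrm{ad}^*_Xp,Y\rangle=-\langle p,[X,Y]\rangle$. *)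

(* Defs.v *)
From HB Require Import structures.
From mathcomp Require Import all_boot all_order all_algebra.
From mathcomp Require Import all_classical all_reals all_analysis.
Set Implicit Arguments. Unset Strict Implicit. Unset Printing Implicit Defensive.
Import Order.TTheory GRing.Theory Num.Theory.
Import numFieldNormedType.Exports.
Local Open Scope ring_scope.

(* The Lie algebra g is modelled as 'rV[R]_n (coordinates w.r.t. a fixed
   basis e_0..e_{n-1}); its dual g-dual is also modelled as 'rV[R]_n, via the
   dual basis, with pairing <p, X> = sum_i p_i X_i. *)

Section Defs.
Variables (R : realType) (n : nat).

Definition pair (p X : 'rV[R]_n) : R := \sum_(i < n) p 0 i * X 0 i.

Definition ipg (M : 'M[R]_n) (X Y : 'rV[R]_n) : R := (X *m M *m Y^T) 0 0.

Definition ebase (i : 'I_n) : 'rV[R]_n := delta_mx 0 i.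

(* sharp : g-dual -> g, characterised by <sharp p, Y>_g = <p, Y> *)
Definition sharp (M : 'M[R]_n) (p : 'rV[R]_n) : 'rV[R]_n := p *m invmx M.

Definition ipd (M : 'M[R]_n) (p q : 'rV[R]_n) : R := pair p (sharp M q).
Definition sqnorm (M : 'M[R]_n) (p : 'rV[R]_n) : R := ipd M p p.

Definition center (br : 'rV[R]_n -> 'rV[R]_n -> 'rV[R]_n) (X : 'rV[R]_n) : Prop :=
  forall Y, br X Y = 0.
Definition vpart br (M : 'M[R]_n) (X : 'rV[R]_n) : Prop :=
  forall Z, center br Z -> ipg M X Z = 0.
Definition vdual br (p : 'rV[R]_n) : Prop :=
  forall Z, center br Z -> pair p Z = 0.
Definition zdual br (M : 'M[R]_n) (p : 'rV[R]_n) : Prop :=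
  forall X, vpart br M X -> pair p X = 0.

(* differential dh_p in the bidual of g, identified with g : its i-th coordinate is the partial
   derivative of h at p in the direction of the i-th dual basis vector. *)
Definition dfun (h : 'rV[R]_n -> R) (p : 'rV[R]_n) : 'rV[R]_n :=
  \row_i (derive h p (ebase i)).

Definition coad br (X p : 'rV[R]_n) : 'rV[R]_n :=
  \row_j (- pair p (br X (ebase j))).

Definition euler br (h : 'rV[R]_n -> R) (p : 'rV[R]_n) : 'rV[R]_n :=
  - coad br (dfun h p) p.

Definition two_step_nilpotent (br : 'rV[R]_n -> 'rV[R]_n -> 'rV[R]_n) : Prop :=
  [/\ (forall (a : R) X Y Z, br (a *: X + Y) Z = a *: br X Z + br Y Z),
      (forall (a : R) X Y Z, br X (a *: Y + Z) = a *: br X Y + br X Z),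
      (forall X, br X X = 0),
      (forall X Y W, br (br X Y) W = 0) &
      (exists X Y, br X Y != 0)].

Definition inner_product_matrix (M : 'M[R]_n) : Prop :=
  M^T = M /\ (forall X : 'rV[R]_n, X != 0 -> 0 < ipg M X X).

End Defs.

(* Main.v *)
Require Import Defs.
From HB Require Import structures.
From mathcomp Require Import all_boot all_order all_algebra.
From mathcomp Require Import all_classical all_reals all_analysis.
Import Order.TTheory GRing.Theory Num.Theory.
Import numFieldNormedType.Exports.
Local Open Scope ring_scope.
Local Open Scope classical_set_scope.
Set Implicit Arguments. Unset Strict Implicit.
From mathcomp Require Import lra.
Lemma pairE (R : realType) n (p X : 'rV[R]_n) : pair p X = (p *m X^T) 0 0.
Proof. by rewrite /pair !mxE; apply: eq_bigr => i _; rewrite mxE. Qed.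

Lemma pairDl (R : realType) n (a b X : 'rV[R]_n) : pair (a + b) X = pair a X + pair b X.
Proof. by rewrite !pairE mulmxDl mxE. Qed.
Lemma pairZl (R : realType) n c (a X : 'rV[R]_n) : pair (c *: a) X = c * pair a X.
Proof. by rewrite !pairE -scalemxAl mxE. Qed.
Lemma pairNl (R : realType) n (a X : 'rV[R]_n) : pair (- a) X = - pair a X.
Proof. by rewrite !pairE mulNmx mxE. Qed.
Lemma pairBl (R : realType) n (a b X : 'rV[R]_n) : pair (a - b) X = pair a X - pair b X.
Proof. by rewrite pairDl pairNl. Qed.
Lemma pairDr (R : realType) n (a b X : 'rV[R]_n) : pair X (a + b) = pair X a + pair X b.
Proof. by rewrite !pairE linearD mulmxDr mxE. Qed.
Lemma pairNr (R : realType) n (a X : 'rV[R]_n) : pair X (- a) = - pair X a.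
Proof. by rewrite !pairE linearN mulmxN mxE. Qed.
Lemma pair0r (R : realType) n (X : 'rV[R]_n) : pair X 0 = 0.
Proof. by rewrite pairE trmx0 mulmx0 mxE. Qed.
Lemma pair0l (R : realType) n (X : 'rV[R]_n) : pair 0 X = 0.
Proof. by rewrite pairE mul0mx mxE. Qed.
Lemma pair_sumr (R : realType) n (z : 'rV[R]_n) (c : 'I_n -> R) (f : 'I_n -> 'rV[R]_n) :
  pair z (\sum_j c j *: f j) = \sum_j c j * pair z (f j).
Proof.
rewrite /pair; under eq_bigr do rewrite summxE mulr_sumr.
rewrite exchange_big /=; apply: eq_bigr => j _; rewrite mulr_sumr.
by apply: eq_bigr => i _; rewrite mxE mulrCA.
Qed.
Lemma pair_row (R : realType) n (z Z : 'rV[R]_n) (f : 'I_n -> 'rV[R]_n) :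
  pair (\row_j pair z (f j)) Z = pair z (\sum_j Z 0 j *: f j).
Proof.
rewrite pair_sumr /pair; apply: eq_bigr => j _; by rewrite mxE mulrC.
Qed.
Lemma pair_delta (R : realType) n i (Y : 'rV[R]_n) : pair (ebase R i) Y = Y 0 i.
Proof. by rewrite pairE /ebase -rowE -tr_col mxE mxE. Qed.

Lemma pair_symS (R : realType) n (S : 'M[R]_n) (a b : 'rV[R]_n) : S^T = S ->
  pair a (b *m S) = pair b (a *m S).
Proof.
move=> hS; have h (X : 'M[R]_1) : X 0 0 = X^T 0 0 by rewrite mxE.
by rewrite !pairE [LHS]h !trmx_mul !trmxK hS mulmxA.
Qed.

Section Br.
End Br.
Section BrFacts.
Variables (R : realType) (n : nat) (br : 'rV[R]_n -> 'rV[R]_n -> 'rV[R]_n).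
Hypothesis H : two_step_nilpotent br.

Lemma brZDl a X Y Z : br (a *: X + Y) Z = a *: br X Z + br Y Z.
Proof. by case: H. Qed.
Lemma brZDr a X Y Z : br X (a *: Y + Z) = a *: br X Y + br X Z.
Proof. by case: H. Qed.
Lemma brXX X : br X X = 0.
Proof. by case: H. Qed.
Lemma brbr X Y W : br (br X Y) W = 0.
Proof. by case: H. Qed.

Lemma br0r X : br X 0 = 0.
Proof.
have := brZDr 1 X 0 0; rewrite !scale1r addr0 => /eqP.
by rewrite eq_sym -subr_eq0 addrK => /eqP.
Qed.
Lemma br0l X : br 0 X = 0.
Proof.
have := brZDl 1 0 0 X; rewrite !scale1r addr0 => /eqP.
by rewrite eq_sym -subr_eq0 addrK => /eqP.
Qed.
Lemma brDr X Y Z : br X (Y + Z) = br X Y + br X Z.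
Proof. by rewrite -{1}[Y]scale1r brZDr scale1r. Qed.
Lemma brDl X Y Z : br (X + Y) Z = br X Z + br Y Z.
Proof. by rewrite -{1}[X]scale1r brZDl scale1r. Qed.
Lemma brZr a X Y : br X (a *: Y) = a *: br X Y.
Proof. by rewrite -[a *: Y]addr0 brZDr br0r addr0. Qed.
Lemma brZl a X Y : br (a *: X) Y = a *: br X Y.
Proof. by rewrite -[a *: X]addr0 brZDl br0l addr0. Qed.
Lemma br_anti X Y : br X Y = - br Y X.
Proof.
have := brXX (X + Y); rewrite brDl !brDr !brXX add0r addr0 => /eqP.
by rewrite addr_eq0 => /eqP.
Qed.
Lemma brNl X Y : br (- X) Y = - br X Y.
Proof. by rewrite -scaleN1r brZl scaleN1r. Qed.
Lemma brBl X Y Z : br (X - Y) Z = br X Z - br Y Z.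
Proof. by rewrite brDl brNl. Qed.
Lemma br_sumr X (c : 'I_n -> R) (Y : 'I_n -> 'rV[R]_n) :
  br X (\sum_j c j *: Y j) = \sum_j c j *: br X (Y j).
Proof.
elim/big_rec2: _ => [|j a b _ <-]; first exact: br0r.
by rewrite brZDr.
Qed.
Lemma br_suml X (c : 'I_n -> R) (Y : 'I_n -> 'rV[R]_n) :
  br (\sum_j c j *: Y j) X = \sum_j c j *: br (Y j) X.
Proof.
elim/big_rec2: _ => [|j a b _ <-]; first exact: br0l.
by rewrite brZDl.
Qed.
Lemma br_row X Y : br X Y = \sum_j Y 0 j *: br X (ebase R j).
Proof. by rewrite {1}[Y]row_sum_delta br_sumr. Qed.
Lemma br_col X Y : br X Y = \sum_j X 0 j *: br (ebase R j) Y.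
Proof. by rewrite {1}[X]row_sum_delta br_suml. Qed.

Lemma center_br X Y : Defs.center br (br X Y).
Proof. by move=> W; apply: brbr. Qed.
Lemma center_r X Z : Defs.center br Z -> br X Z = 0.
Proof. by move=> hZ; rewrite br_anti hZ oppr0. Qed.

Definition Lm (j : 'I_n) : 'M[R]_n := \matrix_(i < n) br (ebase R i) (ebase R j).
Definition Cm : 'M[R]_n := (\bigcap_(j < n) kermx (Lm j))%MS.

Lemma mulLm Z j : Z *m Lm j = br Z (ebase R j).
Proof.
rewrite mulmx_sum_row br_col; apply: eq_bigr => i _.
by rewrite rowK.
Qed.

Lemma centerP Z : Defs.center br Z <-> (Z <= Cm)%MS.
Proof.
split.
  move=> hZ; apply/sub_bigcapmxP => j _.
  by rewrite sub_kermx mulLm hZ.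
move=> /sub_bigcapmxP hZ Y; rewrite br_row big1 // => j _.
by have := hZ j isT; rewrite sub_kermx mulLm => /eqP ->; rewrite scaler0.
Qed.

End BrFacts.
Section MFacts.
Variables (R : realType) (n : nat) (br : 'rV[R]_n -> 'rV[R]_n -> 'rV[R]_n).
Variable M : 'M[R]_n.
Hypothesis H : two_step_nilpotent br.
Hypothesis HM : inner_product_matrix M.

Lemma Msym : M^T = M. Proof. by case: HM. Qed.

Lemma posdef0 (X : 'rV[R]_n) : (X *m M *m X^T) 0 0 = 0 -> X = 0.
Proof.
move=> e; case: (eqVneq X 0) => // /(proj2 HM); rewrite /ipg e.
by rewrite ltxx.
Qed.

Lemma M_unit : M \in unitmx.
Proof.
rewrite unitmxE unitfE; apply/negP => /det0P [v /negP nv vM].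
by apply: nv; apply/eqP/posdef0; rewrite vM mul0mx mxE.
Qed.

Lemma Ssym : (invmx M)^T = invmx M.
Proof. by rewrite trmx_inv Msym. Qed.

Lemma ipg_sym (X Y : 'rV[R]_n) : (X *m M *m Y^T) 0 0 = (Y *m M *m X^T) 0 0.
Proof.
have h (A : 'M[R]_1) : A 0 0 = A^T 0 0 by rewrite mxE.
by rewrite [LHS]h !trmx_mul trmxK Msym mulmxA.
Qed.

Definition G : 'M[R]_n := Cm br *m (M *m (Cm br)^T).

Lemma cap0 : (Cm br :&: kermx (M *m (Cm br)^T))%MS = 0.
Proof.
apply/row_matrixP => i; rewrite row0.
set W := (_ :&: _)%MS.
have : (row i W <= W)%MS by apply: row_sub.
rewrite sub_capmx => /andP [] /submxP [D ->].
rewrite sub_kermx => /eqP e.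
apply: posdef0.
by rewrite trmx_mul mulmxA -(mulmxA (D *m _)) e mul0mx mxE.
Qed.

Lemma CmG : ((Cm br)^T <= G)%MS.
Proof.
have sG : (G <= (Cm br)^T)%MS by rewrite /G mulmxA submxMl.
have rk : \rank G = \rank (Cm br)^T.
  have := mxrank_mul_ker (Cm br) (M *m (Cm br)^T).
  by rewrite cap0 mxrank0 addn0 mxrank_tr.
have := mxrank_leqif_eq sG; rewrite rk => [[_]].
by rewrite eqxx => /esym /andP [].
Qed.

Lemma proj (y : 'rV[R]_n) : exists Zc : 'rV[R]_n,
  (Zc <= Cm br)%MS /\ (y - Zc *m M) *m (Cm br)^T = 0.
Proof.
have : (y *m (Cm br)^T <= G)%MS by apply: submx_trans CmG; apply: submxMl.
move=> /submxP [D e]; exists (D *m Cm br); split; first exact: submxMl.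
by rewrite mulmxBl e /G !mulmxA subrr.
Qed.

Lemma vdual_of (q : 'rV[R]_n) : q *m (Cm br)^T = 0 -> vdual br q.
Proof.
move=> e Z /(centerP H) /submxP [D ->].
by rewrite pairE trmx_mul mulmxA e mul0mx mxE.
Qed.

Lemma vpart_of (X : 'rV[R]_n) : X *m M *m (Cm br)^T = 0 -> vpart br M X.
Proof.
move=> e Z /(centerP H) /submxP [D ->].
by rewrite /ipg trmx_mul mulmxA e mul0mx mxE.
Qed.

Lemma zdual_of (Zc : 'rV[R]_n) : (Zc <= Cm br)%MS -> zdual br M (Zc *m M).
Proof.
move=> hZ X hX; rewrite pairE -ipg_sym.
exact/hX/(centerP H).
Qed.

Lemma zdual_sharp (w : 'rV[R]_n) : zdual br M w -> Defs.center br (w *m invmx M).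
Proof.
move=> hw; have [Zc [hZ e]] := proj w.
set d := w *m invmx M - Zc.
have dM : d *m M = w - Zc *m M.
  by rewrite /d mulmxBl -mulmxA mulVmx ?M_unit // mulmx1.
have vd : vpart br M d by apply: vpart_of; rewrite dM.
have h1 := hw d vd.
have h2 := zdual_of hZ vd.
have : d = 0.
  apply: posdef0; rewrite dM -pairE pairBl h1 h2 subrr //.
move=> /eqP; rewrite subr_eq0 => /eqP ->.
exact/(centerP H).
Qed.

End MFacts.
Section Deriv.
Variables (R : realType) (n : nat) (V : normedModType R).

Lemma is_derive_coord (a : V -> 'M[R]_(1, n)) x v i k : derivable a x v ->
  is_derive x v (fun q => a q i k) ('D_v a x i k).
Proof.
move=> da; have dk := (derivable_mxP a x v).1 da i k.
by apply: DeriveDef => //; rewrite (derive_mx da) mxE.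
Qed.

Lemma is_derive_pair (a b : V -> 'rV[R]_n) x v : derivable a x v -> derivable b x v ->
  is_derive x v (fun q => pair (a q) (b q))
    (pair ('D_v a x) (b x) + pair (a x) ('D_v b x)).
Proof.
move=> da db.
have -> : (fun q => pair (a q) (b q)) = \sum_(k < n) (fun q => a q 0 k * b q 0 k).
  by rewrite fct_sumE; apply/funext => q; rewrite /pair.
have hk k : is_derive x v (fun q => a q 0 k * b q 0 k)
   ('D_v a x 0 k * b x 0 k + a x 0 k * 'D_v b x 0 k).
  have := @is_deriveM _ _ (fun q => a q 0 k) (fun q => b q 0 k) x v _ _
    (is_derive_coord 0 k da) (is_derive_coord 0 k db).
  by move=> h; apply: is_derive_eq h _; rewrite /GRing.scale /= addrC mulrC.
have hs := (@is_derive_sum R V R^o n _ x v _ hk).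
apply: is_derive_eq hs _.
by rewrite big_split.
Qed.

Lemma derive_mulS (a : V -> 'rV[R]_n) (S : 'M[R]_n) x v : derivable a x v ->
  is_derive x v (fun q => a q *m S) ('D_v a x *m S).
Proof.
move=> da.
have hij i j : is_derive x v (fun q => (a q *m S) i j) (('D_v a x *m S) i j).
  have -> : (fun q => (a q *m S) i j) = \sum_(l < n) (fun q => a q i l * S l j).
    by rewrite fct_sumE; apply/funext => q; rewrite mxE.
  have hl l : is_derive x v (fun q => a q i l * S l j) ('D_v a x i l * S l j).
    have := @is_deriveM _ _ (fun q => a q i l) (cst (S l j)) x v _ _
      (is_derive_coord i l da) (is_derive_cst _ _ _).
    by move=> h; apply: is_derive_eq h _; rewrite /GRing.scale /= mulr0 add0r mulrC.
  have hs := (@is_derive_sum R V R^o n _ x v _ hl).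
  by apply: is_derive_eq hs _; rewrite mxE.
have dd : derivable (fun q => a q *m S) x v.
  by apply/derivable_mxP => i j; have [] := hij i j.
apply: DeriveDef => //; rewrite (derive_mx dd); apply/matrixP => i j.
by rewrite mxE derive_val.
Qed.

End Deriv.
Lemma isd (R : realType) (V W : normedModType R) (f : V -> W) a v df :
  is_derive a v f df -> derivable f a v.
Proof. by case. Qed.
Lemma isdv (R : realType) (V W : normedModType R) (f : V -> W) a v df :
  is_derive a v f df -> 'D_v f a = df.
Proof. by case. Qed.
Lemma dfunE (R : realType) n (M : 'M[R]_n) (c q : 'rV[R]_n) : inner_product_matrix M ->
  dfun (fun q => 2^-1 * sqnorm M (q + c)) q = (q + c) *m invmx M.
Proof.
move=> HM; apply/rowP => i; rewrite mxE.
set v := ebase R i.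
have da : is_derive q v (fun q => q + c) v.
  by apply: is_derive_eq (is_deriveD (is_derive_id q v) (is_derive_cst c q v)) _; rewrite addr0.
have db := derive_mulS (invmx M) (isd da).
have dp := is_derive_pair (isd da) (isd db).
have dh := is_deriveZ (2^-1 : R) dp.
rewrite /sqnorm /ipd /sharp.
rewrite (isdv dh) (isdv da) (isdv db).
rewrite [pair (q + c) _](pair_symS _ _ (Ssym HM)) pair_delta.
rewrite (isdv da) pair_delta.
have h2 (y : R) : 2^-1 *: (y + y) = y.
  by rewrite scalerDr /GRing.scale/=; lra.
exact: h2.
Qed.
Lemma const_itv (R : realType) (I : set R) (f : R -> R) : is_interval I ->
  (forall t, I t -> is_derive t 1 f 0) -> forall s t, I s -> I t -> f s = f t.
Proof.
move=> hI hd.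
suff key : forall s t, s <= t -> I s -> I t -> f s = f t.
  move=> s t Is It; case: (leP s t) => st; first exact: key.
  by apply/esym/key => //; apply: ltW.
move=> s t st Is It.
have inI x : x \in `[s, t]%R -> I x.
  by rewrite in_itv /= => /andP [a b]; apply: (hI s t) => //; rewrite a b.
have [c _ e] := @MVT_segment R f (fun=> 0) s t st
  (fun x hx => hd x (inI x (subset_itv_oo_cc hx)))
  (derivable_within_continuous (fun x hx => isd (hd x (inI x hx)))).
by move/eqP: e; rewrite mul0r subr_eq0 => /eqP.
Qed.
Unset Implicit Arguments. Set Strict Implicit.

Theorem lemma2p5 (R : realType) (n : nat)
  (br : 'rV[R]_n -> 'rV[R]_n -> 'rV[R]_n) (M : 'M[R]_n)
  (B : R) (zm : 'rV[R]_n)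
  (I : set R) (p : R -> 'rV[R]_n) :
  two_step_nilpotent br ->
  inner_product_matrix M ->
  zdual br M zm ->
  open I -> is_interval I ->
  (forall t, I t -> derivable p t 1 /\
     derive p t 1 = euler br (fun q => 2^-1 * sqnorm M (q + B *: zm)) (p t)) ->
  exists (z0 : 'rV[R]_n) (A : 'M[R]_n),
    [/\ zdual br M z0,
        (forall q, vdual br q -> vdual br (q *m A)),
        (forall q1 q2, vdual br q1 -> vdual br q2 ->
           ipd M (q1 *m A) q2 = - ipd M q1 (q2 *m A)) &
        (forall t, I t ->
           vdual br (p t - z0) /\
           derivable (fun s => p s - z0) t 1 /\
           derive (fun s => p s - z0) t 1 = (p t - z0) *m A)].
Proof.
move=> H HM Hzm _ hI hp.
have eulerE q : euler br (fun q => 2^-1 * sqnorm M (q + B *: zm)) q =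
    \row_j pair q (br ((q + B *: zm) *m invmx M) (ebase R j)).
  by rewrite /euler dfunE //; apply/rowP => j; rewrite !mxE opprK.
have Evd q : vdual br (euler br (fun q => 2^-1 * sqnorm M (q + B *: zm)) q).
  by rewrite eulerE => Z hZ; rewrite pair_row -(br_row H) (center_r H _ hZ) pair0r.
have [z0 [hz0 hvt]] : exists z0, zdual br M z0 /\ forall t, I t -> vdual br (p t - z0).
  case: (pselect (exists t, I t)) => [[t0 It0]|nI]; last first.
    exists 0; split; first by move=> X _; rewrite pair0l.
    by move=> t It; exfalso; apply: nI; exists t.
  have [Zc [hZc e]] := proj br HM (p t0).
  exists (Zc *m M); split; first exact: zdual_of.
  move=> t It Z hZ.
  have cst_t : pair (p t) Z = pair (p t0) Z.
    apply: (@const_itv R I (fun s => pair (p s) Z) hI) => // s Is.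
    have [ds es] := hp s Is.
    have h := is_derive_pair ds (derivable_cst Z s 1).
    apply: is_derive_eq h _.
    by rewrite es (isdv (is_derive_cst Z s 1)) pair0r addr0; apply: Evd.
  by rewrite pairBl cst_t -pairBl; apply: (vdual_of H e).
set w := z0 + B *: zm.
have hw : zdual br M w by move=> X hX; rewrite pairDl pairZl hz0 // Hzm // mulr0 addr0.
have cw := zdual_sharp H HM hw.
pose A := \matrix_(i < n, j < n) pair z0 (br (ebase R i *m invmx M) (ebase R j)).
have qA q : q *m A = \row_j pair z0 (br (q *m invmx M) (ebase R j)).
  apply/rowP => j; rewrite !mxE.
  rewrite [in RHS](row_sum_delta q) mulmx_suml.
  rewrite (eq_bigr (fun i => q 0 i *: (ebase R i *m invmx M))); last first.
    by move=> i _; rewrite scalemxAl.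
  rewrite (br_suml H) pair_sumr; apply: eq_bigr => i _.
  by rewrite mxE.
exists z0, A; split => //.
- move=> q _; rewrite qA => Z hZ.
  by rewrite pair_row -(br_row H) (center_r H _ hZ) pair0r.
- move=> q1 q2 _ _; rewrite /ipd /sharp.
  rewrite qA pair_row -(br_row H) (pair_symS _ _ (Ssym HM)) qA pair_row.
  rewrite -(br_row H (q2 *m invmx M) (q1 *m invmx M)).
  by rewrite (br_anti H (q2 *m invmx M)) pairNr opprK.
- move=> t It; have [ds es] := hp t It; have vt := hvt t It.
  have dd : is_derive t 1 (fun s => p s - z0) ('D_1 p t - 0).
    exact: (is_deriveB (derivableP ds) (is_derive_cst z0 t 1)).
  split => //; split; first exact: isd dd.
  rewrite (isdv dd) subr0 es eulerE qA; apply/rowP => j; rewrite !mxE.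
  set qv := p t - z0.
  have ept : p t = qv + z0 by rewrite /qv subrK.
  have vq : vdual br qv := vt.
  clearbody qv; rewrite ept -addrA -/w mulmxDl (brDl H) (cw (ebase R j)) addr0 pairDl.
  by rewrite (vq _ (center_br H _ _)) add0r.
Qed.
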